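(* Let $G$ be a TDLC-group and $M$ a finitely generated discrete $\mathbb{Q}[G]$-module. Any two filling pseudo-norms on $M$ are equivalent. In particular, every filling pseudo-norm on a finitely generated proper permutation module $\mathbb{Q}[\Omega]$ is equivalent to the $\ell_1$-norm $\|\cdot\|_1^\Omega$, and hence is a norm.
   Context: A TDLC-group is a totally disconnected locally compact Hausdorff topological group. A discrete $\mathbb{Q}[G]$-module is a left $\mathbb{Q}[G]$-module in which every element has open stabilizer. A $G$-set $\Omega$ is proper if all point stabilizers are compact open; $\mathbb{Q}[\Omega]$ is then a proper permutation module, finitely generated iff $\Omega/G$ is finite, with $\ell_1$-norm $\|\sum a_\omega\omega\|_1^\Omega=\sum|a_\omega|$. For a surjection $\partial:\mathbb{Q}[\Omega]\twoheadrightarrow M$ from a finitely generated proper permutation module, the filling pseudo-norm is $\|m\|_\partial=\inf\{\|x\|_1^\Omega:\partial(x)=m\}$. Two pseudo-norms $\|\cdot\|,\|\cdot\|'$ on a vector space $V$ are equivalent if there is $C>0$ with $\|v\|\le C\|v\|'$ and $\|v\|'\le C\|v\|$ for all $v\in V$. *)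

(* Defs.v *)
From HB Require Import structures.
From Stdlib Require Import Reals ZArith ClassicalEpsilon ProofIrrelevance
  FunctionalExtensionality.
From mathcomp Require Import all_boot all_order all_algebra.

Set Implicit Arguments.
Unset Strict Implicit.
Unset Printing Implicit Defensive.

Import GRing.Theory Num.Theory.

Definition compact_in (T : Type) (op : (T -> Prop) -> Prop) (K : T -> Prop) :=
  forall (I : Type) (U : I -> T -> Prop),
    (forall i, op (U i)) ->
    (forall x, K x -> exists i, U i x) ->
    exists s : list I, forall x, K x -> exists i, List.In i s /\ U i x.

Definition connected_in (T : Type) (op : (T -> Prop) -> Prop) (S : T -> Prop) :=
  forall U V : T -> Prop, op U -> op V ->
    (forall x, S x -> U x \/ V x) ->
    (forall x, S x -> U x -> V x -> False) ->
    (exists x, S x /\ U x) -> (exists x, S x /\ V x) -> False.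

Record TDLCGroup := {
  carrier :> Type;
  gmul : carrier -> carrier -> carrier;
  ginv : carrier -> carrier;
  gone : carrier;
  gmulA : forall x y z, gmul x (gmul y z) = gmul (gmul x y) z;
  gmul1l : forall x, gmul gone x = x;
  gmul1r : forall x, gmul x gone = x;
  gmulVl : forall x, gmul (ginv x) x = gone;
  gmulVr : forall x, gmul x (ginv x) = gone;
  gopen : (carrier -> Prop) -> Prop;
  gopen_full : gopen (fun _ => True);
  gopen_inter : forall U V, gopen U -> gopen V -> gopen (fun x => U x /\ V x);
  gopen_union : forall (I : Type) (F : I -> carrier -> Prop),
      (forall i, gopen (F i)) -> gopen (fun x => exists i, F i x);
  gopen_ext : forall U V, (forall x, U x <-> V x) -> gopen U -> gopen V;
  gmul_cont : forall W x y, gopen W -> W (gmul x y) ->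
      exists U V, gopen U /\ gopen V /\ U x /\ V y /\
                  (forall u v, U u -> V v -> W (gmul u v));
  ginv_cont : forall W, gopen W -> gopen (fun x => W (ginv x));
  g_hausdorff : forall x y, x <> y ->
      exists U V, gopen U /\ gopen V /\ U x /\ V y /\ (forall z, U z -> V z -> False);
  g_loc_compact : forall x, exists U K, gopen U /\ compact_in gopen K /\ U x /\
                                      (forall z, U z -> K z);
  g_tot_disc : forall S, connected_in gopen S -> forall x y, S x -> S y -> x = y
}.

Definition compact_open (G : TDLCGroup) (S : G -> Prop) :=
  gopen S /\ compact_in (@gopen G) S.

Record GSet (G : TDLCGroup) := {
  gs_carrier :> choiceType;
  gs_act : G -> gs_carrier -> gs_carrier;
  gs_act1 : forall w, gs_act (gone G) w = w;
  gs_actM : forall g h w, gs_act (gmul g h) w = gs_act g (gs_act h w)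
}.

Definition proper_gset (G : TDLCGroup) (O : GSet G) :=
  forall w : O, compact_open (fun g : G => @gs_act _ O g w = w).

Definition finite_orbits (G : TDLCGroup) (O : GSet G) :=
  exists s : seq O, forall w : O, exists (g : G) (r : O), r \in s /\ w = @gs_act _ O g r.

(* The permutation module Q[Omega]: finitely supported functions       *)

Record fsq (O : choiceType) := FSQ {
  fsq_fun :> O -> rat;
  fsq_fin : exists s : seq O, forall w, fsq_fun w != (0 : rat) -> w \in s
}.

Section FSQ.
Variable O : choiceType.
Local Open Scope ring_scope.

Lemma fsq_inj (x y : fsq O) : fsq_fun x = fsq_fun y -> x = y.
Proof.
case: x => f pf; case: y => g pg /= E; subst g.
by rewrite (proof_irrelevance _ pf pg).
Qed.

Definition fsq_eqb (x y : fsq O) : bool :=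
  if excluded_middle_informative (x = y) then true else false.

Lemma fsq_eqP : Equality.axiom fsq_eqb.
Proof.
by move=> x y; rewrite /fsq_eqb; case: excluded_middle_informative => H;
  constructor.
Qed.

HB.instance Definition _ := hasDecEq.Build (fsq O) fsq_eqP.

Definition fsq_find (P : pred (fsq O)) (n : nat) : option (fsq O) :=
  match excluded_middle_informative (exists x, P x) with
  | left H => Some (proj1_sig (constructive_indefinite_description _ H))
  | right _ => None
  end.

Lemma fsq_find_correct P n x : fsq_find P n = Some x -> P x.
Proof.
rewrite /fsq_find; case: excluded_middle_informative => // H [<-].
by case: constructive_indefinite_description.
Qed.

Lemma fsq_find_complete (P : pred (fsq O)) :
  (exists x, P x) -> exists n, fsq_find P n.
Proof.
by move=> H; exists 0%N; rewrite /fsq_find; case: excluded_middle_informative.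
Qed.

Lemma fsq_find_ext (P Q : pred (fsq O)) : P =1 Q -> fsq_find P =1 fsq_find Q.
Proof.
by move=> E n; have -> : P = Q by apply: functional_extensionality.
Qed.

HB.instance Definition _ := hasChoice.Build (fsq O)
  fsq_find_correct fsq_find_complete fsq_find_ext.

Program Definition fsq0 : fsq O := @FSQ O (fun _ => 0) _.
Next Obligation. by exists [::]. Qed.

Program Definition fsq_add (x y : fsq O) : fsq O :=
  @FSQ O (fun w => x w + y w) _.
Next Obligation.
case: (fsq_fin x) => s Hs; case: (fsq_fin y) => t Ht.
exists (s ++ t) => w; rewrite mem_cat.
case: (boolP (x w == 0)) => [/eqP -> | /Hs -> //].
by rewrite add0r => /Ht ->; rewrite orbT.
Qed.

Program Definition fsq_opp (x : fsq O) : fsq O := @FSQ O (fun w => - x w) _.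
Next Obligation.
case: (fsq_fin x) => s Hs; exists s => w; rewrite oppr_eq0; exact: Hs.
Qed.

Program Definition fsq_scale (a : rat) (x : fsq O) : fsq O :=
  @FSQ O (fun w => a * x w) _.
Next Obligation.
case: (fsq_fin x) => s Hs; exists s => w; rewrite mulf_eq0 negb_or.
by case/andP => _; exact: Hs.
Qed.

Lemma fsq_addA : associative fsq_add.
Proof. by move=> x y z; apply: fsq_inj; apply: functional_extensionality => w /=; rewrite addrA. Qed.
Lemma fsq_addC : commutative fsq_add.
Proof. by move=> x y; apply: fsq_inj; apply: functional_extensionality => w /=; rewrite addrC. Qed.
Lemma fsq_add0 : left_id fsq0 fsq_add.
Proof. by move=> x; apply: fsq_inj; apply: functional_extensionality => w /=; rewrite add0r. Qed.
Lemma fsq_addN : left_inverse fsq0 fsq_opp fsq_add.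
Proof. by move=> x; apply: fsq_inj; apply: functional_extensionality => w /=; rewrite addNr. Qed.

HB.instance Definition _ := GRing.isZmodule.Build (fsq O)
  fsq_addA fsq_addC fsq_add0 fsq_addN.

Lemma fsq_scaleA a b v : fsq_scale a (fsq_scale b v) = fsq_scale (a * b) v.
Proof. by apply: fsq_inj; apply: functional_extensionality => w /=; rewrite mulrA. Qed.
Lemma fsq_scale1 : left_id 1 fsq_scale.
Proof. by move=> x; apply: fsq_inj; apply: functional_extensionality => w /=; rewrite mul1r. Qed.
Lemma fsq_scaleDr : right_distributive fsq_scale +%R.
Proof. by move=> a x y; apply: fsq_inj; apply: functional_extensionality => w /=; rewrite mulrDr. Qed.
Lemma fsq_scaleDl v : {morph fsq_scale^~ v : a b / a + b}.
Proof. by move=> a b; apply: fsq_inj; apply: functional_extensionality => w /=; rewrite mulrDl. Qed.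

HB.instance Definition _ := GRing.Zmodule_isLmodule.Build rat (fsq O)
  fsq_scaleA fsq_scale1 fsq_scaleDr fsq_scaleDl.

Definition fsq_supp (x : fsq O) : seq O :=
  proj1_sig (constructive_indefinite_description _ (fsq_fin x)).

(* the l1-norm; independent of the chosen list since off-support terms
   vanish *)
Definition l1 (x : fsq O) : rat := \sum_(w <- undup (fsq_supp x)) `|x w|.

End FSQ.

Program Definition fsq_act (G : TDLCGroup) (O : GSet G) (g : G) (x : fsq O) : fsq O :=
  @FSQ O (fun w => x (@gs_act _ O (ginv g) w)) _.
Next Obligation.
case: (fsq_fin x) => s Hs; exists (map (@gs_act _ O g) s) => w /Hs H.
apply/mapP; exists (@gs_act _ O (ginv g) w) => //.
by rewrite -gs_actM gmulVr gs_act1.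
Qed.

Record DiscreteModule (G : TDLCGroup) := {
  dm_carrier :> lmodType rat;
  dm_act : G -> dm_carrier -> dm_carrier;
  dm_act_lin : forall g (a : rat) (u v : dm_carrier),
      dm_act g (a *: u + v)%R = (a *: dm_act g u + dm_act g v)%R;
  dm_act1 : forall m, dm_act (gone G) m = m;
  dm_actM : forall g h m, dm_act (gmul g h) m = dm_act g (dm_act h m);
  dm_discrete : forall m, gopen (fun g : G => dm_act g m = m)
}.

Definition fg_module (G : TDLCGroup) (M : DiscreteModule G) :=
  exists gens : seq M, forall m : M,
    exists l : seq (rat * G * M),
      (forall t, List.In t l -> t.2 \in gens) /\
      m = (\sum_(t <- l) t.1.1 *: @dm_act _ M t.1.2 t.2)%R.

Definition int2Z (z : int) : Z :=
  match z with Posz n => Z.of_nat n | Negz n => Z.opp (Z.of_nat n.+1) end.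

Definition rat2R (q : rat) : R := Rdiv (IZR (int2Z (numq q))) (IZR (int2Z (denq q))).

Definition is_inf (E : R -> Prop) (r : R) : Prop :=
  (forall x, E x -> Rle r x) /\
  (forall b, (forall x, E x -> Rle b x) -> Rle b r).

(* infimum of a set of reals (a chosen greatest lower bound; it exists
   for the nonempty, nonnegative sets used below) *)
Definition inf_R (E : R -> Prop) : R := epsilon (inhabits R0) (is_inf E).

Definition filling_map (G : TDLCGroup) (O : GSet G) (M : lmodType rat)
    (actM : G -> M -> M) (d : {linear fsq O -> M}) : Prop :=
  [/\ proper_gset O, finite_orbits O,
      (forall (g : G) (x : fsq O), d (fsq_act g x) = actM g (d x))
    & (forall m : M, exists x : fsq O, d x = m)].

Definition filling_norm (O : choiceType) (M : lmodType rat)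
    (d : fsq O -> M) (m : M) : R :=
  inf_R (fun r => exists x : fsq O, d x = m /\ r = rat2R (l1 x)).

Definition l1R (O : choiceType) (x : fsq O) : R := rat2R (l1 x).

Definition equiv_pnorms (V : Type) (n1 n2 : V -> R) : Prop :=
  exists C : R, Rlt R0 C /\
    forall v, Rle (n1 v) (Rmult C (n2 v)) /\ Rle (n2 v) (Rmult C (n1 v)).

(* Main.v *)
Require Import Defs.
From HB Require Import structures.
From Stdlib Require Import Reals.
From mathcomp Require Import all_boot all_order all_algebra.
From mathcomp Require Import Rstruct.
Set Implicit Arguments. Unset Strict Implicit.
Import Order.TTheory GRing.Theory Num.Theory.
Local Open Scope ring_scope.
Lemma int2ZE (z : int) : IZR (int2Z z) = (z%:~R : R).
Proof.
case: z => n /=.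
  by rewrite -INR_IZR_INZ INRE.
change (IZR (Z.opp (Z.of_nat n.+1)) = (Negz n)%:~R).
by rewrite opp_IZR -INR_IZR_INZ INRE NegzE mulrNz.
Qed.
Lemma rat2RE q : rat2R q = ratr q.
Proof. by rewrite /rat2R RdivE !int2ZE. Qed.
From Stdlib Require Import ClassicalEpsilon Lra FunctionalExtensionality.
Lemma inf_RP (E : R -> Prop) : (exists x, E x) -> (forall x, E x -> Rle 0 x) ->
  is_inf E (inf_R E).
Proof.
move=> [x0 Ex0] lb.
have [m Hm] : {m | is_lub (fun y => E (Ropp y)) m}.
  apply: completeness.
    exists R0 => y Ey; have := lb _ Ey; lra.
  by exists (Ropp x0); rewrite Ropp_involutive.
have H : is_inf E (Ropp m).
  case: Hm => ub lub; split.
    move=> x Ex; have := ub (Ropp x); rewrite Ropp_involutive => /(_ Ex) h; lra.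
  move=> b hb; suff : Rle m (Ropp b) by lra.
  apply: lub => y Ey; have := hb _ Ey; lra.
rewrite /inf_R; exact: (epsilon_spec (inhabits R0) (is_inf E) (ex_intro _ _ H)).
Qed.
Section F.
Variable O : choiceType.
Implicit Types x y : fsq O.
Lemma fsq_addE x y w : (x + y) w = x w + y w. Proof. by []. Qed.
Lemma fsq_scaleE a x w : (a *: x) w = a * x w. Proof. by []. Qed.
Lemma fsq0E w : (0 : fsq O) w = 0. Proof. by []. Qed.
Lemma fsq_sumE (I : Type) (s : seq I) (F : I -> fsq O) w :
  (\sum_(i <- s) F i) w = \sum_(i <- s) F i w.
Proof.
elim: s => [|i s IH]; first by rewrite !big_nil.
by rewrite !big_cons fsq_addE IH.
Qed.

Lemma sum_supp (f : O -> rat) s t : uniq s -> uniq t ->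
  (forall w, f w != 0 -> w \in s) -> (forall w, f w != 0 -> w \in t) ->
  \sum_(w <- s) f w = \sum_(w <- t) f w.
Proof.
move=> us ut hs ht.
have E u : \sum_(w <- u) f w = \sum_(w <- filter (fun w => f w != 0) u) f w.
  rewrite big_filter [RHS]big_mkcond; apply: eq_bigr => w _ /=.
  by case: eqP.
rewrite E [RHS]E; apply: perm_big; apply: uniq_perm; rewrite ?filter_uniq //.
move=> w; rewrite !mem_filter; case: (boolP (f w != 0)) => //= h.
by rewrite (hs _ h) (ht _ h).
Qed.

Lemma fsq_suppP x w : x w != 0 -> w \in fsq_supp x.
Proof.
rewrite /fsq_supp; case: constructive_indefinite_description => s hs /=; exact: hs.
Qed.

Lemma l1E x s : uniq s -> (forall w, x w != 0 -> w \in s) ->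
  l1 x = \sum_(w <- s) `|x w|.
Proof.
move=> us hs; rewrite /l1; apply: sum_supp; rewrite ?undup_uniq // => w;
  rewrite normr_eq0 => h; [rewrite mem_undup; exact: fsq_suppP | exact: hs].
Qed.

Lemma l1_ge0 x : 0 <= l1 x.
Proof. by rewrite /l1 sumr_ge0. Qed.

Lemma l1_eq0 x : l1 x = 0 -> x = 0.
Proof.
move=> h; apply: fsq_inj; apply: functional_extensionality => w /=.
apply/eqP; apply/negPn/negP => nz.
have : `|x w| <= l1 x.
  rewrite /l1 (bigD1_seq w) ?undup_uniq ?mem_undup ?fsq_suppP //=.
  by rewrite lerDl sumr_ge0.
by rewrite h normr_le0 (negbTE nz).
Qed.

Lemma l1D x y : l1 (x + y) <= l1 x + l1 y.
Proof.
set s := undup (fsq_supp x ++ fsq_supp y).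
have us : uniq s by rewrite undup_uniq.
have hx w : x w != 0 -> w \in s by move=> h; rewrite mem_undup mem_cat (fsq_suppP h).
have hy w : y w != 0 -> w \in s by move=> h; rewrite mem_undup mem_cat (fsq_suppP h) orbT.
rewrite (l1E us hx) (l1E us hy) (@l1E (x + y) s us); last first.
  move=> w; rewrite fsq_addE; case: (boolP (x w != 0)) => [/hx //|].
  by rewrite negbK => /eqP ->; rewrite add0r => /hy.
rewrite -big_split /=.
by apply: ler_sum => w _; exact: ler_normD.
Qed.

Lemma l1Z a x : l1 (a *: x) = `|a| * l1 x.
Proof.
have us := undup_uniq (fsq_supp x).
have hx w : x w != 0 -> w \in undup (fsq_supp x) by move=> h; rewrite mem_undup fsq_suppP.
rewrite (l1E us hx) (l1E us) ?mulr_sumr.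
  by apply: eq_bigr => w _; rewrite fsq_scaleE normrM.
by move=> w; rewrite fsq_scaleE mulf_eq0 negb_or => /andP [_ /hx].
Qed.

Lemma l10 : l1 (0 : fsq O) = 0.
Proof. by rewrite (@l1E _ [::]) ?big_nil // => w; rewrite fsq0E eqxx. Qed.

Program Definition delta (r : O) : fsq O := @FSQ O (fun v => if v == r then 1 else 0) _.
Next Obligation. by exists [:: r] => w; rewrite mem_seq1; case: (w == r); rewrite ?eqxx. Qed.

Lemma fsq_decomp x : x = \sum_(w <- undup (fsq_supp x)) x w *: delta w.
Proof.
apply: fsq_inj; apply: functional_extensionality => v.
rewrite fsq_sumE.
rewrite (eq_bigr (fun w => if w == v then x w else 0)); last first.
  by move=> w _; rewrite fsq_scaleE /= (eq_sym v); case: (w == v); rewrite ?mulr1 ?mulr0.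
case: (boolP (x v != 0)) => h.
  rewrite (bigD1_seq v) ?undup_uniq ?mem_undup ?(fsq_suppP h) //= eqxx big1 ?addr0 //.
  by move=> w /negbTE ->.
rewrite big1 ?(eqP (negPn h)) // => w _; case: eqP => // ->; exact: (eqP (negPn h)).
Qed.
End F.
Lemma l1_sum (O : choiceType) (I : Type) (s : seq I) (F : I -> fsq O) :
  l1 (\sum_(i <- s) F i) <= \sum_(i <- s) l1 (F i).
Proof.
elim: s => [|i s IH]; first by rewrite !big_nil l10.
rewrite !big_cons; apply: le_trans (l1D _ _) _; exact: lerD.
Qed.

Lemma le_sum_mem (I : eqType) (s : seq I) (F : I -> rat) r :
  (forall i, 0 <= F i) -> r \in s -> F r <= \sum_(i <- s) F i.
Proof.
move=> h; elim: s => [|i s IH] //; rewrite in_cons big_cons => /orP [/eqP ->|/IH].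
  by rewrite lerDl sumr_ge0.
by move=> H; apply: le_trans H _; rewrite lerDr.
Qed.

Section Act.
Variables (G : TDLCGroup) (O : GSet G).
Lemma actK g (w : O) : gs_act (ginv g) (gs_act g w) = w.
Proof. by rewrite -gs_actM gmulVl gs_act1. Qed.
Lemma actVK g (w : O) : gs_act g (gs_act (ginv g) w) = w.
Proof. by rewrite -gs_actM gmulVr gs_act1. Qed.

Lemma act_delta g (r : O) : fsq_act g (delta r) = delta (gs_act g r).
Proof.
apply: fsq_inj; apply: functional_extensionality => v /=.
case: (boolP (v == gs_act g r)) => [/eqP ->|h]; first by rewrite actK eqxx.
case: eqP => // e; case/negP: h; rewrite -e actVK //.
Qed.

Lemma l1_act g (y : fsq O) : l1 (fsq_act g y) = l1 y.
Proof.
have inj : injective (gs_act g : O -> O) by apply: (can_inj (actK g)).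
rewrite (@l1E _ _ (map (gs_act g) (undup (fsq_supp y)))).
- rewrite big_map /l1; apply: eq_bigr => v _ /=; by rewrite actK.
- by rewrite map_inj_uniq ?undup_uniq.
move=> w /= h; apply/mapP; exists (gs_act (ginv g) w); last by rewrite actVK.
by rewrite mem_undup fsq_suppP.
Qed.
End Act.
Lemma rat_dir (G : TDLCGroup) (M : lmodType rat) (actM : G -> M -> M)
  (O1 O2 : GSet G) (d1 : {linear fsq O1 -> M}) (d2 : {linear fsq O2 -> M}) :
  finite_orbits O1 ->
  (forall g x, d1 (fsq_act g x) = actM g (d1 x)) ->
  (forall g x, d2 (fsq_act g x) = actM g (d2 x)) ->
  (forall m, exists x, d2 x = m) ->
  exists C : rat, 0 < C /\ forall x, exists z, d2 z = d1 x /\ l1 z <= C * l1 x.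
Proof.
move=> [s hs] e1 e2 sur2.
pose xr (r : O1) := epsilon (inhabits 0) (fun z : fsq O2 => d2 z = d1 (delta r)).
have hxr r : d2 (xr r) = d1 (delta r).
  exact: (epsilon_spec (inhabits 0) (fun z : fsq O2 => d2 z = d1 (delta r)) (sur2 _)).
pose gw (w : O1) := epsilon (inhabits (gone G, w))
   (fun p : G * O1 => p.2 \in s /\ w = gs_act p.1 p.2).
have hgw w : (gw w).2 \in s /\ w = gs_act (gw w).1 (gw w).2.
  apply: (epsilon_spec (inhabits (gone G, w))
   (fun p : G * O1 => p.2 \in s /\ w = gs_act p.1 p.2)).
  by have [g [r [rs ->]]] := hs w; exists (g, r).
pose y (w : O1) := fsq_act (gw w).1 (xr (gw w).2).
pose K := \sum_(r <- s) l1 (xr r).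
have K0 : 0 <= K by rewrite sumr_ge0 // => r _; exact: l1_ge0.
have hy w : d2 (y w) = d1 (delta w).
  rewrite e2 hxr -e1 act_delta; case: (hgw w) => _ <- //.
have ly w : l1 (y w) <= K.
  rewrite l1_act /K; apply: (le_sum_mem (F := fun r => l1 (xr r))); [move=> r; exact: l1_ge0|].
  by case: (hgw w).
exists (K + 1); split; first by rewrite ltr_wpDl.
move=> x; exists (\sum_(w <- undup (fsq_supp x)) x w *: y w); split.
  rewrite (big_morph d2 (raddfD d2) (raddf0 d2)) [in RHS](fsq_decomp x) (big_morph d1 (raddfD d1) (raddf0 d1)); apply: eq_bigr => w _.
  by rewrite !linearZ /= hy.
apply: le_trans (l1_sum _ _) _.
apply: (@le_trans _ _ (\sum_(w <- undup (fsq_supp x)) `|x w| * K)).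
  by apply: ler_sum => w _; rewrite l1Z ler_wpM2l.
rewrite -mulr_suml -/(l1 x) mulrC ler_wpM2r ?l1_ge0 //.
by rewrite lerDl.
Qed.
Lemma rat2R_le a b : a <= b -> Rle (rat2R a) (rat2R b).
Proof. by move=> h; rewrite !rat2RE; apply/RleP; rewrite ler_rat. Qed.
Lemma rat2R_M a b : rat2R (a * b) = Rmult (rat2R a) (rat2R b).
Proof. by rewrite !rat2RE rmorphM. Qed.
Lemma rat2R_gt0 a : 0 < a -> Rlt 0 (rat2R a).
Proof. by move=> h; rewrite rat2RE; apply/RltP; rewrite ltr0q. Qed.
Lemma rat2R_ge0 a : 0 <= a -> Rle 0 (rat2R a).
Proof. by move=> h; rewrite rat2RE; apply/RleP; rewrite ler0q. Qed.

Lemma fn_inf (O : choiceType) (M : lmodType rat) (d : fsq O -> M) m :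
  (exists x, d x = m) ->
  is_inf (fun r => exists x : fsq O, d x = m /\ r = rat2R (l1 x)) (filling_norm d m).
Proof.
move=> [x hx]; apply: inf_RP; first by exists (rat2R (l1 x)); exists x.
by move=> r [y [_ ->]]; apply: rat2R_ge0; apply: l1_ge0.
Qed.

Lemma fn_ge0 (O : choiceType) (M : lmodType rat) (d : fsq O -> M) m :
  (exists x, d x = m) -> Rle 0 (filling_norm d m).
Proof.
move=> h; case: (fn_inf h) => _; apply => r [y [_ ->]].
by apply: rat2R_ge0; apply: l1_ge0.
Qed.

Lemma real_dir (G : TDLCGroup) (M : lmodType rat) (actM : G -> M -> M)
  (O1 O2 : GSet G) (d1 : {linear fsq O1 -> M}) (d2 : {linear fsq O2 -> M}) :
  finite_orbits O1 ->
  (forall g x, d1 (fsq_act g x) = actM g (d1 x)) ->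
  (forall g x, d2 (fsq_act g x) = actM g (d2 x)) ->
  (forall m, exists x, d1 x = m) ->
  (forall m, exists x, d2 x = m) ->
  exists C : R, Rlt 0 C /\ forall m, Rle (filling_norm d2 m) (Rmult C (filling_norm d1 m)).
Proof.
move=> fo e1 e2 s1 s2.
have [C [C0 hC]] := rat_dir fo e1 e2 s2.
exists (rat2R C); split; first exact: rat2R_gt0.
move=> m.
have C0' := rat2R_gt0 C0.
have [lb2 _] := fn_inf (s2 m).
have [_ gl1] := fn_inf (s1 m).
suff : Rle (Rmult (filling_norm d2 m) (Rinv (rat2R C))) (filling_norm d1 m).
  move=> h.
  have := Rmult_le_compat_l _ _ _ (Rlt_le _ _ C0') h.
  rewrite (Rmult_comm (filling_norm d2 m)) -Rmult_assoc Rinv_r ?Rmult_1_l //.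
  exact: Rgt_not_eq.
apply: gl1 => r [x [hx ->]].
have [z [hz lz]] := hC x.
have h1 : Rle (filling_norm d2 m) (rat2R (l1 x * C)).
  apply: Rle_trans (rat2R_le _); last by rewrite mulrC; exact: lz.
  by apply: lb2; exists z; rewrite hz hx.
rewrite rat2R_M in h1.
have := Rmult_le_compat_r _ _ _ (Rlt_le _ _ (Rinv_0_lt_compat _ C0')) h1.
rewrite Rmult_assoc Rinv_r ?Rmult_1_r //; exact: Rgt_not_eq.
Qed.
Lemma equiv_gen (G : TDLCGroup) (M : lmodType rat) (actM : G -> M -> M)
  (O1 O2 : GSet G) (d1 : {linear fsq O1 -> M}) (d2 : {linear fsq O2 -> M}) :
  finite_orbits O1 -> finite_orbits O2 ->
  (forall g x, d1 (fsq_act g x) = actM g (d1 x)) ->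
  (forall g x, d2 (fsq_act g x) = actM g (d2 x)) ->
  (forall m, exists x, d1 x = m) ->
  (forall m, exists x, d2 x = m) ->
  equiv_pnorms (filling_norm d1) (filling_norm d2).
Proof.
move=> f1 f2 e1 e2 s1 s2.
have [C1 [C10 h1]] := real_dir f1 e1 e2 s1 s2.
have [C2 [C20 h2]] := real_dir f2 e2 e1 s2 s1.
exists (Rplus C1 C2); split; first lra.
move=> m; have := fn_ge0 (s1 m); have := fn_ge0 (s2 m).
have := h1 m; have := h2 m.
set a := filling_norm d1 m; set b := filling_norm d2 m.
move=> H2 H1 hb ha; split.
  apply: Rle_trans H2 _; apply: Rmult_le_compat_r => //; lra.
apply: Rle_trans H1 _; apply: Rmult_le_compat_r => //; lra.
Qed.

Definition idlin (O : choiceType) : {linear fsq O -> fsq O} := idfun.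

Lemma fn_id (O : choiceType) (x : fsq O) : filling_norm (idlin O) x = l1R x.
Proof.
have [lb gl] := fn_inf (d := idlin O) (m := x) (ex_intro _ x erefl).
apply: Rle_antisym.
  by apply: lb; exists x.
by apply: gl => r [y [/= -> ->]]; apply: Rle_refl.
Qed.
Theorem corollary4p3 (G : TDLCGroup) :
  (forall M : DiscreteModule G, fg_module M ->
     forall (O1 O2 : GSet G) (d1 : {linear fsq O1 -> M}) (d2 : {linear fsq O2 -> M}),
       filling_map (@dm_act G M) d1 -> filling_map (@dm_act G M) d2 ->
       equiv_pnorms (filling_norm d1) (filling_norm d2))
  /\
  (forall (O O' : GSet G) (d : {linear fsq O' -> fsq O}),
     proper_gset O -> finite_orbits O ->
     filling_map (@fsq_act G O) d ->
     equiv_pnorms (filling_norm d) (@l1R O) /\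
     (forall x : fsq O, filling_norm d x = R0 -> x = 0%R)).
Proof.
split.
  move=> M _ O1 O2 d1 d2 [_ f1 e1 s1] [_ f2 e2 s2]; exact: equiv_gen f1 f2 e1 e2 s1 s2.
move=> O O' d _ fO [_ f' e s].
have ei : forall g (x : fsq O), idlin O (fsq_act g x) = fsq_act g (idlin O x) by [].
have si : forall m : fsq O, exists x, idlin O x = m by move=> m; exists m.
have [C [C0 hC]] := equiv_gen f' fO e ei s si.
split.
  by exists C; split => // v; rewrite -fn_id; exact: hC.
move=> x hx; apply: l1_eq0.
have := (hC x).2; rewrite fn_id hx Rmult_0_r => h.
have h0 : Rle 0 (l1R x) by apply: rat2R_ge0; exact: l1_ge0.
have : rat2R (l1 x) = R0 by rewrite /l1R in h h0; exact: Rle_antisym.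
by rewrite rat2RE => /eqP; rewrite fmorph_eq0 => /eqP.
Qed.
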